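(* Let $m,n$ be even nonnegative integers. If $A(m)$ and $A(n)$ are isomorphic as edge-labeled directed graphs, then $m=n$.
   Context: A hyperbinary expansion of a nonnegative integer $n$ is a word $x_0\cdots x_k$ over $\{0,1,2\}$ with $x_0\ne0$ and $\sum_i x_i2^{k-i}=n$; the empty word is the unique expansion of $0$. $\mathcal H(n)$ is the set of such expansions. $A(n)$ is the directed graph on $\mathcal H(n)$ with the following labeled arcs, for arbitrary words $\mathbf x,\mathbf y$ whenever both endpoints lie in $\mathcal H(n)$: \begin{itemize} \item an arc labeled $\to$ from $\mathbf x02\mathbf y$ to $\mathbf x10\mathbf y$ and from $2\mathbf y$ to $10\mathbf y$; \item an arc labeled $\twoheadrightarrow$ from $\mathbf x12\mathbf y$ to $\mathbf x20\mathbf y$. \end{itemize} An isomorphism of edge-labeled directed graphs is a bijection $\varphi$ of vertex sets such that $(x,y)$ is an arc with label $\ell$ if and only if $(\varphi(x),\varphi(y))$ is an arc with label $\ell$. *)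

(* Defs.v *)
From mathcomp Require Import all_boot.
Set Implicit Arguments. Unset Strict Implicit. Unset Printing Implicit Defensive.

(* value of x_0 ... x_k = sum_i x_i 2^(k-i)  (Horner, most significant first) *)
Definition word_val (w : seq nat) : nat := foldl (fun acc d => acc.*2 + d) 0 w.

(* w is a hyperbinary expansion of n: digits in {0,1,2}, x_0 <> 0, value n.
   The empty word is the (unique) expansion of 0. *)
Definition hyperbinary (n : nat) (w : seq nat) : Prop :=
  all (fun d => d < 3) w /\
  (if w is x0 :: _ then x0 != 0 else True) /\
  word_val w = n.

Inductive arc_label := Single | Double .

Definition raw_arc (l : arc_label) (x y : seq nat) : Prop :=
  match l with
  | Single =>
      (exists u v, x = u ++ [:: 0; 2] ++ v /\ y = u ++ [:: 1; 0] ++ v) \/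
      (exists v, x = 2 :: v /\ y = [:: 1, 0 & v])
  | Double =>
      exists u v, x = u ++ [:: 1; 2] ++ v /\ y = u ++ [:: 2; 0] ++ v
  end.

Definition A_arc (n : nat) (l : arc_label) (x y : seq nat) : Prop :=
  hyperbinary n x /\ hyperbinary n y /\ raw_arc l x y.

Definition A_isomorphic (m n : nat) : Prop :=
  exists (phi psi : seq nat -> seq nat),
    (forall x, hyperbinary m x -> hyperbinary n (phi x)) /\
    (forall y, hyperbinary n y -> hyperbinary m (psi y)) /\
    (forall x, hyperbinary m x -> psi (phi x) = x) /\
    (forall y, hyperbinary n y -> phi (psi y) = y) /\
    (forall l x y, hyperbinary m x -> hyperbinary m y ->
       (A_arc m l x y <-> A_arc n l (phi x) (phi y))).

(* Main.v *)
Require Import Defs.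
From mathcomp Require Import all_boot zify.

Definition ones (x : seq nat) := count_mem 1 x.
Definition leadb (x : seq nat) := if x is x0 :: _ then x0 != 0 else true.

Lemma hypE n x : hyperbinary n x <-> [/\ all (fun d => d < 3) x, leadb x & word_val x = n].
Proof. rewrite /hyperbinary /leadb; case: x => [|a x] /=; split.
- by case=> h [_ h2]; split.
- by case=> h _ h2; split.
- by case=> h [h1 h2]; split.
- by case=> h h1 h2; split.
Qed.

Lemma wv_rcons w d : word_val (rcons w d) = (word_val w).*2 + d.
Proof. by rewrite /word_val foldl_rcons. Qed.

Lemma foldl_shift v a : foldl (fun acc d => acc.*2 + d) a v = a * 2 ^ size v + word_val v.
Proof.
elim: v a => [|d v IH] a /=; first by rewrite /word_val /=; lia.
rewrite /word_val /= IH (IH d) expnS; lia.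
Qed.

Lemma wv_cat u v : word_val (u ++ v) = word_val u * 2 ^ size v + word_val v.
Proof. by rewrite /word_val foldl_cat foldl_shift. Qed.

Lemma wv_cons d v : word_val (d :: v) = d * 2 ^ size v + word_val v.
Proof. by rewrite -cat1s wv_cat /word_val /=. Qed.

Lemma wv_pos x : x <> [::] -> leadb x -> 0 < word_val x.
Proof.
case: x => [//|d v] _ /= hd; rewrite wv_cons.
have : 0 < 2 ^ size v by rewrite expn_gt0.
lia.
Qed.

Lemma hyp0 x : hyperbinary 0 x -> x = [::].
Proof.
move/hypE=> [_ hl hv]; case: x hl hv => [//|d v] hl hv.
have := wv_pos (d :: v) ltac:(by []) hl.
rewrite hv //.
Qed.

Lemma hyp_rcons n w d : hyperbinary n (rcons w d) <->
  [/\ d < 3, hyperbinary (word_val w) w, n = (word_val w).*2 + d & (w = [::] -> d != 0)].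
Proof.
rewrite !hypE wv_rcons -cats1 all_cat /= andbT.
case: w => [|a w] /=; split.
- by case=> h1 h2 <-; split=> //; apply/hypE.
- by case=> h1 _ -> h2; split=> //; apply: h2.
- case=> /andP[/andP[h0 h1] h2] h3 <-; split=> //; apply/hypE; split=> //=.
  by rewrite h0.
- case=> h1 /hypE[h2 h3 _] -> _; split=> //; move: h2 => /= ->; by rewrite h1.
Qed.

Fixpoint Hf (k n : nat) : seq (seq nat) :=
  match k with
  | 0 => [::]
  | k'.+1 => if n == 0 then [:: [::]] else
      if odd n then [seq rcons w 1 | w <- Hf k' n./2]
      else [seq rcons w 0 | w <- Hf k' n./2] ++ [seq rcons w 2 | w <- Hf k' n./2.-1]
  end.

Lemma Hf_mem k n x : n < k -> (x \in Hf k n) <-> hyperbinary n x.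
Proof.
elim: k n x => [//|k IH] n x /= hn.
case: eqP => [->|/eqP n0].
  rewrite inE; split; first by move/eqP->; apply/hypE.
  by move/hyp0->.
case/lastP: x => [|w d].
  split.
    case: ifP => _; first by case/mapP=> w _ /eqP; rewrite eq_sym -size_eq0 size_rcons.
    by rewrite mem_cat => /orP[] /mapP[w _ /eqP]; rewrite eq_sym -size_eq0 size_rcons.
  by move/hypE=> [_ _ /eqP]; rewrite eq_sym (negbTE n0).
rewrite hyp_rcons.
case: ifP => hodd.
  split.
    case/mapP=> w' hw' /rcons_inj [-> ->].
    move/IH: hw' => /(_ ltac:(lia)) hw'; move/hypE: (hw') => [_ _ hv].
    split=> //; [by rewrite hv | lia].
  case=> d3 hw hnv hd.
  have d1 : d = 1 by move: hodd; rewrite hnv oddD odd_double /=; lia.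
  subst d; rewrite (mem_map (@rcons_injl _ 1)).
  apply/IH; first lia.
  by have -> : n./2 = word_val w by lia.
rewrite mem_cat; split.
  case/orP=> /mapP[w' hw' /rcons_inj [-> ->]];
  (move/IH: hw' => /(_ ltac:(lia)) hw'; move/hypE: (hw') => [_ _ hv];
  split=> //).
  all: try (by rewrite hv).
  all: try lia.
  move=> w0; subst w'; move: hv; rewrite /word_val /=; lia.
case=> d3 hw hnv hd.
have : d = 0 \/ d = 2 by move: hodd; rewrite hnv oddD odd_double /=; lia.
case=> hd0; subst d; apply/orP; [left; rewrite (mem_map (@rcons_injl _ 0))|right; rewrite (mem_map (@rcons_injl _ 2))];
 (apply/IH; first lia).
  by have -> : n./2 = word_val w by lia.
by have -> : n./2.-1 = word_val w by lia.
Qed.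

Lemma Hf_uniq k n : uniq (Hf k n).
Proof.
elim: k n => [//|k IH] n /=.
case: eqP => // _; case: ifP => _.
  by rewrite map_inj_uniq //; exact: rcons_injl.
rewrite cat_uniq !map_inj_uniq ?IH //; try exact: rcons_injl.
rewrite andbT /=; apply/hasPn=> x /mapP[w _ ->]; apply/mapP=> [[w2 _ /rcons_inj]] [] _ //.
Qed.

Lemma ones_rcons w d : ones (rcons w d) = ones w + (d == 1).
Proof. by rewrite /ones -cats1 count_cat /= addn0 eq_sym. Qed.

Lemma Hf_sum k n : n < k -> \sum_(x <- Hf k n) 2 ^ ones x = n.+1.
Proof.
elim: k n => [//|k IH] n /= hn.
case: eqP => [->|/eqP n0]; first by rewrite big_seq1.
have sh : forall d m, m < k -> \sum_(x <- [seq rcons w d | w <- Hf k m]) 2 ^ ones x = 2 ^ (d == 1) * m.+1.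
  move=> d m hm; rewrite big_map -(IH m hm) big_distrr /=.
  by apply: eq_bigr => w _; rewrite ones_rcons expnD mulnC.
case: ifP => hodd.
  rewrite sh /=; lia.
rewrite big_cat !sh /=; lia.
Qed.

Lemma wv_swap a b a' b' u v : a.*2 + b = a'.*2 + b' ->
  word_val (u ++ [:: a; b] ++ v) = word_val (u ++ [:: a'; b'] ++ v).
Proof.
move=> h; rewrite !wv_cat !size_cat /=.
have -> : word_val [:: a; b] = word_val [:: a'; b'] by rewrite /word_val /=; lia.
by [].
Qed.

Lemma lead_swap a b a' b' u v : (u = [::] -> a != 0 -> a' != 0) ->
  leadb (u ++ [:: a; b] ++ v) -> leadb (u ++ [:: a'; b'] ++ v).
Proof. case: u => [|c u] //= h; exact: h. Qed.

Lemma all3_swap a b a' b' u v : a' < 3 -> b' < 3 ->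
  all (fun d => d < 3) (u ++ [:: a; b] ++ v) -> all (fun d => d < 3) (u ++ [:: a'; b'] ++ v).
Proof. move=> ha hb; rewrite !all_cat /= ha hb; case/and3P=> -> _ -> //. Qed.

Lemma arc_ones m l x y : A_arc m l x y ->
  if l is Single then ones y = (ones x).+1 else ones x = (ones y).+1.
Proof.
case=> _ [_]; case: l => /=.
  case=> [[u [v [-> ->]]]|[v [-> ->]]]; rewrite /ones ?count_cat /=; lia.
case=> u [v [-> ->]]; rewrite /ones ?count_cat /=; lia.
Qed.

Lemma descent m x : hyperbinary m x -> 2 \in x ->
  exists l y, A_arc m l x y /\ sumn y < sumn x.
Proof.
move=> hx h2; move: hx; case/splitPr: h2 => u v.
elim/last_ind: u v => [|u c IH] v hx.
  exists Single, [:: 1, 0 & v]; split; last by rewrite /=; lia.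
  split=> //; split; last by right; exists v.
  move/hypE: hx => [h1 h2 h3]; apply/hypE; split.
  - by move: h1 => /=.
  - by [].
  by rewrite -h3 !wv_cons /= expnS; lia.
have E : rcons u c ++ 2 :: v = u ++ [:: c; 2] ++ v by rewrite -cats1 -catA.
rewrite E in hx *.
move/hypE: (hx) => [h1 h2 h3].
have hc : c < 3 by move: h1; rewrite !all_cat /= => /and3P[_ /andP[->]].
have : c = 0 \/ c = 1 \/ c = 2 by lia.
case=> [hc0|[hc0|hc0]]; subst c.
- exists Single, (u ++ [:: 1; 0] ++ v); split; last by rewrite !sumn_cat /=; lia.
  split=> //; split; last by left; exists u, v.
  apply/hypE; split.
  + exact: (all3_swap _ _ _ _ _ _ _ _ h1).
  + apply: (lead_swap _ _ _ _ _ _ _ h2) => //.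
  + by rewrite -h3; apply: wv_swap.
- exists Double, (u ++ [:: 2; 0] ++ v); split; last by rewrite !sumn_cat /=; lia.
  split=> //; split; last by exists u, v.
  apply/hypE; split.
  + exact: (all3_swap _ _ _ _ _ _ _ _ h1).
  + apply: (lead_swap _ _ _ _ _ _ _ h2) => //.
  + by rewrite -h3; apply: wv_swap.
- exact: (IH (2 :: v) hx).
Qed.

Arguments descent {m x}.
Arguments arc_ones {m l x y}.

Lemma bin_uniq x : forall m z, hyperbinary m x -> hyperbinary m z ->
  2 \notin x -> 2 \notin z -> x = z.
Proof.
elim/last_ind: x => [|w d IH] m z hx hz nx nz.
  move/hypE: hx => [_ _ /= hm]; subst m; rewrite /word_val /= in hz.
  by rewrite (hyp0 _ hz).
case/lastP: z hz nz => [|w' d'] hz nz.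
  move/hypE: hz => [_ _ /= hm]; subst m; rewrite /word_val /= in hx.
  by move: (hyp0 _ hx) => /eqP; rewrite -size_eq0 size_rcons.
move/hyp_rcons: hx => [d3 hw hm hd].
move/hyp_rcons: hz => [d3' hw' hm' hd'].
move: nx nz; rewrite !mem_rcons !in_cons !negb_or => /andP[nd nw] /andP[nd' nw'].
have dd : d = d' by lia.
have vv : word_val w = word_val w' by lia.
subst d'; congr rcons; apply: (IH (word_val w)) => //; by rewrite vv.
Qed.

Lemma even_word k : exists w, hyperbinary k.*2 w /\ ones w = 0.
Proof.
elim: k {-2}k (leqnn k) => [|N IH] k hk.
  have -> : k = 0 by lia.
  by exists [::]; split=> //; apply/hypE.
case: (posnP k) => [->|kp]; first by exists [::]; split=> //; apply/hypE.
have [w' [hw' o']] := IH k./2 ltac:(lia).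
exists (rcons w' (odd k).*2); split.
  move/hypE: (hw') => [_ _ hv].
  apply/hyp_rcons; split.
  - by case: (odd k).
  - by rewrite hv.
  - move: hv; rewrite /= => ->; have := odd_double_half k; lia.
  - move=> e; subst w'; move: hv; rewrite /word_val /= => h.
    have : k = 1 by lia.
    by move->.
by rewrite ones_rcons o'; case: (odd k).
Qed.

Section Transport.
Variables (m n : nat) (phi : seq nat -> seq nat).
Hypothesis hphi : forall x, hyperbinary m x -> hyperbinary n (phi x).
Hypothesis harc : forall l x y, A_arc m l x y -> A_arc n l (phi x) (phi y).

Lemma transport_aux N x : sumn x <= N -> hyperbinary m x ->
  exists z, [/\ hyperbinary m z, 2 \notin z & ones (phi x) + ones z = ones x + ones (phi z)].
Proof.
elim: N x => [|N IH] x hN hx.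
  case: (boolP (2 \in x)) => h2; last by exists x; split=> //; lia.
  have [l [y [_ hy]]] := descent hx h2; lia.
case: (boolP (2 \in x)) => h2; last by exists x; split=> //; lia.
have [l [y [hxy hy]]] := descent hx h2.
have hyy : hyperbinary m y by case: hxy => _ [].
have [z [hz z2 e]] := IH y ltac:(lia) hyy.
exists z; split=> //.
have a1 := arc_ones hxy; have a2 := arc_ones (harc _ _ _ hxy).
by case: l hxy a1 a2 => /= _ a1 a2; lia.
Qed.

Lemma transport x x' : hyperbinary m x -> hyperbinary m x' ->
  ones (phi x) + ones x' = ones x + ones (phi x').
Proof.
move=> hx hx'.
have [z [hz z2 e]] := transport_aux _ _ (leqnn _) hx.
have [z' [hz' z2' e']] := transport_aux _ _ (leqnn _) hx'.
have zz := bin_uniq _ _ _ hz hz' z2 z2'; subst z'; lia.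
Qed.
End Transport.



Theorem mainTheorem10 (m n : nat) :
  ~~ odd m -> ~~ odd n -> A_isomorphic m n -> m = n.
Proof.
move=> em en [phi [psi [hphi [hpsi [pp [pp' harc]]]]]].
have fphi : forall l x y, A_arc m l x y -> A_arc n l (phi x) (phi y).
  by move=> l x y hxy; case: (hxy) => hx [hy _]; apply/(harc l x y hx hy).
have fpsi : forall l x y, A_arc n l x y -> A_arc m l (psi x) (psi y).
  move=> l x y hxy; case: (hxy) => hx [hy _].
  apply/(harc l _ _ (hpsi _ hx) (hpsi _ hy)); by rewrite !pp'.
have mE : m = (m./2).*2 by have := odd_double_half m; move: em; case: (odd m) => //=; lia.
have nE : n = (n./2).*2 by have := odd_double_half n; move: en; case: (odd n) => //=; lia.
have [w0 [hw0 o0]] := even_word m./2; rewrite -mE in hw0.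
have [w1 [hw1 o1]] := even_word n./2; rewrite -nE in hw1.
have ge1 : forall x, hyperbinary m x -> ones x <= ones (phi x).
  move=> x hx; have := transport _ _ _ fphi _ _ hx hw0; lia.
have ge2 : forall y, hyperbinary n y -> ones y <= ones (psi y).
  move=> y hy; have := transport _ _ _ fpsi _ _ hy hw1; lia.
have eqo : forall x, hyperbinary m x -> ones (phi x) = ones x.
  move=> x hx; have := ge1 x hx; have := ge2 _ (hphi x hx); rewrite pp //; lia.
set Lm := Hf m.+1 m; set Ln := Hf n.+1 n.
have pe : perm_eq (map phi Lm) Ln.
  apply: uniq_perm; last 1 first.
  - move=> y; apply/idP/idP.
      case/mapP=> x /Hf_mem hx ->; apply/Hf_mem => //; exact: hphi (hx (ltnSn _)).
    move/Hf_mem => /(_ (ltnSn _)) hy; rewrite -(pp' y hy); apply: map_f.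
    by apply/Hf_mem => //; apply: hpsi.
  - rewrite map_inj_in_uniq ?Hf_uniq //.
    move=> a b /Hf_mem ha /Hf_mem hb e.
    by rewrite -(pp a (ha (ltnSn _))) -(pp b (hb (ltnSn _))) e.
  - exact: Hf_uniq.
have := Hf_sum _ _ (ltnSn m); have := Hf_sum _ _ (ltnSn n).
rewrite -/Lm -/Ln -(perm_big _ pe) big_map => h1 h2.
have : \sum_(x <- Lm) 2 ^ ones (phi x) = \sum_(x <- Lm) 2 ^ ones x.
  apply: eq_big_seq => x /Hf_mem hx; by rewrite eqo //; apply: hx.
move=> h3; move: h1; rewrite [X in X = _]h3 h2; lia.
Qed.
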